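(* Let $A\in\mathbb{Z}^{d\times n}$, $\mathbf{b}\in\mathbb{Z}^d$, $\mathbf{c}\in\mathbb{Z}^n$, $\mathbf{u}\in\mathbb{Z}_{\ge0}^n$. Let $\mathbf{x}_k$ be feasible and let $\alpha_1\mathbf{z}_1,\dots,\alpha_j\mathbf{z}_j$ ($j\ge2$) be successive steepest-descent augmentations, i.e. $\alpha_i\mathbf{z}_i$ is a steepest-descent augmentation relative to $\mathbf{x}_k+\sum_{l<i}\alpha_l\mathbf{z}_l$ for each $i$. If $\mathbf{z}_1$ and $\mathbf{z}_j$ do not have the same sign pattern, then $-\mathbf{c}^\top\mathbf{z}_1/\|\mathbf{z}_1\|_1\ >\ -\mathbf{c}^\top\mathbf{z}_j/\|\mathbf{z}_j\|_1$.
   Context: Feasible means $A\mathbf{x}=\mathbf{b}$, $\mathbf{0}\le\mathbf{x}\le\mathbf{u}$, $\mathbf{x}\in\mathbb{Z}^n$. A steepest-descent augmentation relative to a feasible $\mathbf{x}$ is $\alpha\mathbf{s}$ where $\mathbf{s}\in\mathbb{Z}^n\setminus\{\mathbf{0}\}$, $A\mathbf{s}=\mathbf{0}$, $\mathbf{c}^\top\mathbf{s}<0$, $\alpha$ is a positive integer with $\mathbf{x}+\alpha\mathbf{s}$ feasible, and $-\mathbf{c}^\top\mathbf{s}/\|\mathbf{s}\|_1\ge-\mathbf{c}^\top\mathbf{z}/\|\mathbf{z}\|_1$ for every $\mathbf{z}\in\mathbb{Z}^n\setminus\{\mathbf{0}\}$ with $A\mathbf{z}=\mathbf{0}$ and $\mathbf{x}+\mathbf{z}$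 feasible. Two vectors $\mathbf{v},\mathbf{w}\in\mathbb{R}^n$ have the same sign pattern if $v_iw_i\ge0$ for all $i$ (i.e. there is no coordinate in which one is positive and the other negative). *)

(* Defs.v *)
From HB Require Import structures.
From mathcomp Require Import all_boot all_order all_algebra.
Set Implicit Arguments. Unset Strict Implicit. Unset Printing Implicit Defensive.
Import Order.TTheory GRing.Theory Num.Theory.
Local Open Scope ring_scope.

Definition feasible (d n : nat) (A : 'M[int]_(d, n)) (b : 'cV[int]_d)
  (u : 'cV[int]_n) (x : 'cV[int]_n) : Prop :=
  A *m x = b /\ (forall i : 'I_n, 0 <= x i 0 /\ x i 0 <= u i 0).

Definition cdot (n : nat) (c z : 'cV[int]_n) : int := \sum_(i < n) c i 0 * z i 0.

Definition l1norm (n : nat) (z : 'cV[int]_n) : int := \sum_(i < n) `|z i 0|.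

Definition descent_ratio (n : nat) (c z : 'cV[int]_n) : rat :=
  (- cdot c z)%:~R / (l1norm z)%:~R.

Definition sd_augmentation (d n : nat) (A : 'M[int]_(d, n)) (b : 'cV[int]_d)
  (c u : 'cV[int]_n) (x : 'cV[int]_n) (alpha : int) (s : 'cV[int]_n) : Prop :=
  s != 0 /\ A *m s = 0 /\ cdot c s < 0 /\ 0 < alpha /\
      feasible A b u (x + alpha *: s) /\
      (forall z : 'cV[int]_n, z != 0 -> A *m z = 0 -> feasible A b u (x + z) ->
        descent_ratio c z <= descent_ratio c s).

Definition same_sign_pattern (n : nat) (v w : 'cV[int]_n) : Prop :=
  forall i : 'I_n, 0 <= v i 0 * w i 0.

(* Main.v *)
Require Import Defs.
From HB Require Import structures.
From mathcomp Require Import all_boot all_order all_algebra zify ring.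
Import Order.TTheory GRing.Theory Num.Theory.
Local Open Scope ring_scope.
Set Implicit Arguments. Unset Strict Implicit.

Lemma l1norm_ge0 n (v : 'cV[int]_n) : 0 <= l1norm v.
Proof. by apply: sumr_ge0 => i _. Qed.

Lemma l1norm_gt0 n (v : 'cV[int]_n) : v != 0 -> 0 < l1norm v.
Proof.
move=> nz; rewrite lt_def l1norm_ge0 andbT; apply: contra nz => /eqP h.
apply/eqP/matrixP => i k; rewrite ord1 mxE.
by apply/eqP; rewrite -normr_eq0; apply/eqP; apply: (psumr_eq0P _ h) => // l _.
Qed.

Lemma ratio_leE n (c v w : 'cV[int]_n) : 0 < l1norm v -> 0 < l1norm w ->
  (descent_ratio c v <= descent_ratio c w) =
  (- cdot c v * l1norm w <= - cdot c w * l1norm v).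
Proof.
move=> hv hw; rewrite /descent_ratio ler_pdivrMr ?ltr0z // mulrAC.
by rewrite ler_pdivlMr ?ltr0z // -!intrM ler_int.
Qed.

Lemma feas_step d n (A : 'M[int]_(d, n)) b u (x s : 'cV[int]_n) (a : int) :
  feasible A b u x -> feasible A b u (x + a *: s) -> 1 <= a -> A *m s = 0 ->
  feasible A b u (x + s).
Proof.
move=> [hx hb] [_ hbs] ha hs; split; first by rewrite mulmxDr hx hs addr0.
move=> i; have := hb i; have := hbs i; rewrite !mxE => -[h1 h2] [h3 h4].
clear hbs hb; move: h1 h2 h3 h4 ha; move: (x i 0) (s i 0) (u i 0) a => X S U a'; nia.
Qed.

Lemma cdotD n (c v w : 'cV[int]_n) a : cdot c (a *: v + w) = a * cdot c v + cdot c w.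
Proof.
rewrite /cdot mulr_sumr -big_split /=; apply: eq_bigr => i _; rewrite !mxE; ring.
Qed.

Lemma l1normD n (v w : 'cV[int]_n) a : 0 <= a -> l1norm (a *: v + w) <= a * l1norm v + l1norm w.
Proof.
move=> ha; rewrite /l1norm mulr_sumr -big_split /=; apply: ler_sum => i _; rewrite !mxE.
by rewrite (le_trans (ler_normD _ _)) // normrM ger0_norm.
Qed.

Lemma cdot_sum n (c : 'cV[int]_n) m (g : nat -> int) (v : nat -> 'cV[int]_n) :
  cdot c (\sum_(i < m) g i *: v i) = \sum_(i < m) g i * cdot c (v i).
Proof.
rewrite /cdot (eq_bigr (fun k : 'I_n => \sum_(i < m) c k 0 * (g i * v i k 0))).
  rewrite exchange_big /=; apply: eq_bigr => i _; rewrite mulr_sumr.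
  by apply: eq_bigr => k _; rewrite mulrCA.
by move=> k _; rewrite summxE mulr_sumr; apply: eq_bigr => i _; rewrite mxE.
Qed.

Lemma mul_sum d n (A : 'M[int]_(d, n)) m (g : nat -> int) (v : nat -> 'cV[int]_n) :
  (forall i, (i < m)%N -> A *m v i = 0) -> A *m (\sum_(i < m) g i *: v i) = 0.
Proof.
move=> h; rewrite mulmx_sumr big1 // => i _; by rewrite -scalemxAr h ?scaler0.
Qed.

Lemma abs_sum_lt m (a : 'I_m -> int) p q : p != q -> a p * a q < 0 ->
  `|\sum_i a i| < \sum_i `|a i|.
Proof.
move=> pq hpq.
rewrite [X in `|X| < _](bigD1 p) //= [X in `|_ + X| < _](bigD1 q) 1?eq_sym //=.
rewrite [X in _ < X](bigD1 p) //= [X in _ < _ + X](bigD1 q) 1?eq_sym //=.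
set r := \sum_(i | _ && _) a i; set R := \sum_(i | _ && _) `|a i|.
have : `|r| <= R by apply: ler_norm_sum.
nia.
Qed.

Lemma l1norm_sum_lt n m (g : nat -> int) (v : nat -> 'cV[int]_n) (p q : 'I_m) (k : 'I_n) :
  (forall i, 0 <= g i) -> p != q -> (g p * v p k 0) * (g q * v q k 0) < 0 ->
  l1norm (\sum_(i < m) g i *: v i) < \sum_(i < m) g i * l1norm (v i).
Proof.
move=> hg pq hk.
rewrite /l1norm (eq_bigr (fun i : 'I_m => \sum_(l < n) `|g i * v i l 0|)); last first.
  by move=> i _; rewrite mulr_sumr; apply: eq_bigr => l _; rewrite normrM ger0_norm.
rewrite exchange_big /= (bigD1 k) //= [X in _ < X](bigD1 k) //=.
apply: ltr_leD.
  rewrite summxE (eq_bigr (fun i : 'I_m => g i * v i k 0)); last by move=> i _; rewrite mxE.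
  exact: (@abs_sum_lt m (fun i : 'I_m => g i * v i k 0) p q pq hk).
apply: ler_sum => l _; rewrite summxE (eq_bigr (fun i : 'I_m => g i * v i l 0)).
  exact: ler_norm_sum.
by move=> i _; rewrite mxE.
Qed.

Lemma mono_arith (a Ps Pt Ns Nt Pw Nw : int) : 1 <= a -> 0 < Ps -> 0 < Ns -> 0 < Nt ->
  Pw = a * Ps + Pt -> Nw <= a * Ns + Nt -> Pw * Ns <= Ps * Nw -> Pt * Ns <= Ps * Nt.
Proof. move=> *; nia. Qed.

Lemma term_arith (g Pi Ni P0 N0 : int) : 0 <= g -> P0 * Ni <= Pi * N0 ->
  P0 * (g * Ni) <= g * Pi * N0.
Proof. move=> *; nia. Qed.

Unset Implicit Arguments. Set Strict Implicit.

Theorem lemma5 (d n : nat) (A : 'M[int]_(d, n)) (b : 'cV[int]_d)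
  (c u : 'cV[int]_n) (xk : 'cV[int]_n) (j : nat)
  (alpha : nat -> int) (z : nat -> 'cV[int]_n) :
  (forall i : 'I_n, 0 <= u i 0) ->
  feasible A b u xk ->
  (2 <= j)%N ->
  (forall i : nat, (i < j)%N ->
     sd_augmentation A b c u (xk + \sum_(l < i) alpha l *: z l) (alpha i) (z i)) ->
  ~ same_sign_pattern (z 0%N) (z j.-1) ->
  descent_ratio c (z j.-1) < descent_ratio c (z 0%N).
Proof.
move=> hu hfeas.
case: j => [|[|m]] //= hj H hns.
have feasx : forall i, (i <= m.+2)%N -> feasible A b u (xk + \sum_(l < i) alpha l *: z l).
  case=> [|i] hi; first by rewrite big_ord0 addr0.
  have [_ [_ [_ [_ [hf _]]]]] := H i hi.
  by rewrite big_ord_recr /= addrA.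
have step : forall i, (i < m.+2)%N ->
    feasible A b u (xk + \sum_(l < i) alpha l *: z l + z i).
  move=> i hi; have [_ [hA [_ [ha [hf _]]]]] := H i hi.
  apply: (feas_step (feasx i (ltnW hi)) hf _ hA); lia.
have Nz : forall i, (i < m.+2)%N -> 0 < l1norm (z i).
  by move=> i hi; have [nz _] := H i hi; exact: l1norm_gt0.
have cdot0 : forall w : 'cV[int]_n, cdot c w < 0 -> w != 0.
  move=> w hw; apply/eqP => w0; move: hw; rewrite w0 /cdot big1 ?ltxx // => k _.
  by rewrite mxE mulr0.
have mono : forall i, (i.+1 < m.+2)%N ->
    descent_ratio c (z i.+1) <= descent_ratio c (z i).
  move=> i hi; have [nz [hA [hc [ha [_ hbest]]]]] := H i (ltnW hi).
  have [nz' [hA' [hc' _]]] := H i.+1 hi.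
  set w := alpha i *: z i + z i.+1.
  have hw : feasible A b u (xk + \sum_(l < i) alpha l *: z l + w).
    have -> : xk + \sum_(l < i) alpha l *: z l + w =
              xk + \sum_(l < i.+1) alpha l *: z l + z i.+1.
      by rewrite big_ord_recr /= /w !addrA.
    exact: step.
  have cw : cdot c w = alpha i * cdot c (z i) + cdot c (z i.+1) by apply: cdotD.
  have Aw : A *m w = 0 by rewrite mulmxDr -scalemxAr hA hA' scaler0 addr0.
  have wnz : w != 0 by apply: cdot0; rewrite cw; nia.
  have := hbest w wnz Aw hw.
  rewrite !ratio_leE ?Nz ?l1norm_gt0 //; try lia.
  have hN : l1norm w <= alpha i * l1norm (z i) + l1norm (z i.+1).
    by apply: l1normD; lia.
  move=> hle; apply: (@mono_arith (alpha i) _ _ _ _ (- cdot c w) (l1norm w)) => //.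
  - by rewrite oppr_gt0.
  - by apply: Nz; apply: ltnW.
  - exact: Nz.
  - by rewrite cw opprD mulrN.
have chain : forall k i, (i + k = m.+1)%N ->
    descent_ratio c (z m.+1) <= descent_ratio c (z i).
  elim=> [|k IH] i hik; first by rewrite addn0 in hik; rewrite hik.
  apply: (le_trans (IH i.+1 _)); first by rewrite addSnnS.
  apply: mono; lia.
rewrite ltNge; apply/negP => hle.
have r0 : forall i, (i < m.+2)%N -> descent_ratio c (z 0%N) <= descent_ratio c (z i).
  move=> i hi; apply: (le_trans hle); apply: (chain (m.+1 - i)%N); lia.
have [k hk] : exists k, z 0%N k 0 * z m.+1 k 0 < 0.
  case: (pickP (fun k => z 0%N k 0 * z m.+1 k 0 < 0)) => [k hk|h]; first by exists k.
  exfalso; apply: hns => i; have := h i; rewrite ltNge => /negbFE.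
  done.
pose g i := if (i < m.+1)%N then alpha i else 1.
have g0 : forall i, 0 <= g i.
  move=> i; rewrite /g; case: ifP => hi //.
  have [_ [_ [_ [ha _]]]] := H i (ltnW hi); lia.
set W := \sum_(i < m.+2) g i *: z i.
have Weq : W = \sum_(l < m.+1) alpha l *: z l + z m.+1.
  rewrite /W big_ord_recr /= /g ltnn scale1r; congr (_ + _).
  by apply: eq_bigr => i _; rewrite ltn_ord.
have [nz0 [hA0 [hc0 [ha0 [_ hbest0]]]]] := H 0%N isT.
have hW : feasible A b u (xk + \sum_(l < 0) alpha l *: z l + W).
  by rewrite big_ord0 addr0 Weq addrA; exact: step.
have AW : A *m W = 0.
  by apply: mul_sum => i hi; have [_ [hA _]] := H i hi.
have cW : - cdot c W = \sum_(i < m.+2) g i * (- cdot c (z i)).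
  by rewrite /W cdot_sum -sumrN; apply: eq_bigr => i _; rewrite mulrN.
have Nlt : l1norm W < \sum_(i < m.+2) g i * l1norm (z i).
  apply: (@l1norm_sum_lt _ _ g z ord0 ord_max k g0) => //.
  rewrite /= /g ltnn /=; nia.
have key : (- cdot c (z 0%N)) * \sum_(i < m.+2) g i * l1norm (z i) <= - cdot c W * l1norm (z 0%N).
  rewrite cW mulr_suml mulr_sumr; apply: ler_sum => i _.
  apply: term_arith => //.
  by rewrite -ratio_leE ?Nz //; apply: r0.
have Wnz : W != 0.
  apply: cdot0; rewrite -oppr_gt0 cW.
  rewrite (bigD1 ord0) //=; apply: ltr_wpDr.
    by apply: sumr_ge0 => i _; have [_ [_ [hc _]]] := H i (ltn_ord i); apply: mulr_ge0 => //; lia.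
  rewrite /g /=; nia.
have := hbest0 W Wnz AW hW.
rewrite ratio_leE ?l1norm_gt0 ?Nz // => hb.
have P0 : 0 < - cdot c (z 0%N) by rewrite oppr_gt0.
have h := Nlt; rewrite -(ltr_pM2l P0) in h.
by have := le_trans key hb; rewrite leNgt h.
Qed.
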